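(* Let $E$ be a pseudo effect algebra satisfying (RDP). If $m_1$ and $m_2$ are $\sigma$-additive measures on $E$, then so are $m_1\vee m_2$ and $m_1\wedge m_2$ (lattice operations in $\mathcal J(E)$).
   Context: Pseudo effect algebra: partial algebra $(E;+,0,1)$ such that for all $a,b,c$: (i) $a+b$ and $(a+b)+c$ exist iff $b+c$ and $a+(b+c)$ exist, and then they are equal; (ii) there is exactly one $d$ and one $e$ with $a+d=e+a=1$; (iii) if $a+b$ exists there are $d,e$ with $a+b=d+a=b+e$; (iv) if $1+a$ or $a+1$ exists then $a=0$. Order: $a\le b$ iff $a+c=b$ for some $c$. (RDP): whenever $a_1+a_2=b_1+b_2$ there are $d_1,\dots,d_4$ with $d_1+d_2=a_1$, $d_3+d_4=a_2$, $d_1+d_3=b_1$, $d_2+d_4=b_2$. Measure: $m:E\to[0,\infty)$ additive on defined sums. A signed measure $m$ is $\sigma$-additive if whenever $a_1\le a_2\le\cdots$ and $a=\bigvee_n a_n$ exists in $E$, $m(a)=\lim_n m(a_n)$; for a measure this is equivalent to: $a_n\searrow 0$ (decreasing with infimum $0$) implies $m(a_n)\to0$. $\mathcal J(E)$: signed measures that are differences of two measures, ordered by $m_1\le^+m_2$ iff $m_2-m_1$ is a measure (a lattice-ordered group under (RDP)). *)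

(* Defs.v *)
From Stdlib Require Import Reals.
Open Scope R_scope.

(* A partial binary operation is modelled as E -> E -> option E:
   [pl a b = Some s] means "a + b exists and equals s". *)

Definition sum_l {E : Type} (pl : E -> E -> option E) (a b c : E) : option E :=
  match pl a b with Some ab => pl ab c | None => None end.
Definition sum_r {E : Type} (pl : E -> E -> option E) (a b c : E) : option E :=
  match pl b c with Some bc => pl a bc | None => None end.

Record PEA := mkPEA {
  pea_car :> Type;
  pea_plus : pea_car -> pea_car -> option pea_car;
  pea_zero : pea_car;
  pea_one : pea_car;
  (* (i): (a+b)+c exists iff a+(b+c) exists, and then they are equal *)
  pea_assoc : forall a b c, sum_l pea_plus a b c = sum_r pea_plus a b c;
  pea_compl_r : forall a, exists! d, pea_plus a d = Some pea_one;
  pea_compl_l : forall a, exists! e, pea_plus e a = Some pea_one;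
  pea_conj : forall a b s, pea_plus a b = Some s ->
      exists d e, pea_plus d a = Some s /\ pea_plus b e = Some s;
  pea_one_zero : forall a,
      (pea_plus pea_one a <> None \/ pea_plus a pea_one <> None) -> a = pea_zero
}.

Definition pea_le (E : PEA) (a b : E) : Prop := exists c, pea_plus E a c = Some b.

Definition RDP (E : PEA) : Prop :=
  forall a1 a2 b1 b2 s : E,
    pea_plus E a1 a2 = Some s -> pea_plus E b1 b2 = Some s ->
    exists d1 d2 d3 d4 : E,
      pea_plus E d1 d2 = Some a1 /\ pea_plus E d3 d4 = Some a2 /\
      pea_plus E d1 d3 = Some b1 /\ pea_plus E d2 d4 = Some b2.

Definition pea_is_sup (E : PEA) (a : nat -> E) (x : E) : Prop :=
  (forall n, pea_le E (a n) x) /\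
  (forall y, (forall n, pea_le E (a n) y) -> pea_le E x y).

Definition additive (E : PEA) (m : E -> R) : Prop :=
  forall a b s : E, pea_plus E a b = Some s -> m s = m a + m b.

Definition measure (E : PEA) (m : E -> R) : Prop :=
  (forall a, 0 <= m a) /\ additive E m.

Definition sigma_additive (E : PEA) (m : E -> R) : Prop :=
  forall (a : nat -> E) (x : E),
    (forall n, pea_le E (a n) (a (S n))) -> pea_is_sup E a x ->
    Un_cv (fun n => m (a n)) (m x).

Definition inJ (E : PEA) (m : E -> R) : Prop :=
  exists mu nu : E -> R, measure E mu /\ measure E nu /\ forall a, m a = mu a - nu a.

Definition leJ (E : PEA) (m1 m2 : E -> R) : Prop :=
  measure E (fun a => m2 a - m1 a).

Definition is_joinJ (E : PEA) (m1 m2 m : E -> R) : Prop :=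
  inJ E m /\ leJ E m1 m /\ leJ E m2 m /\
  forall k, inJ E k -> leJ E m1 k -> leJ E m2 k -> leJ E m k.

Definition is_meetJ (E : PEA) (m1 m2 m : E -> R) : Prop :=
  inJ E m /\ leJ E m m1 /\ leJ E m m2 /\
  forall k, inJ E k -> leJ E k m1 -> leJ E k m2 -> leJ E k m.

(* Main.v *)
Require Import Defs.
From Stdlib Require Import Reals Lra Lia.
Open Scope R_scope.

Lemma assoc_lr (E : PEA) (a b c ab s : E) :
  pea_plus E a b = Some ab -> pea_plus E ab c = Some s ->
  exists bc, pea_plus E b c = Some bc /\ pea_plus E a bc = Some s.
Proof.
  intros H1 H2. pose proof (pea_assoc E a b c) as H.
  unfold sum_l, sum_r in H. rewrite H1, H2 in H.
  destruct (pea_plus E b c) as [bc|] eqn:Hbc; [|discriminate]. eauto.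
Qed.

Lemma assoc_rl (E : PEA) (a b c bc s : E) :
  pea_plus E b c = Some bc -> pea_plus E a bc = Some s ->
  exists ab, pea_plus E a b = Some ab /\ pea_plus E ab c = Some s.
Proof.
  intros H1 H2. pose proof (pea_assoc E a b c) as H.
  unfold sum_l, sum_r in H. rewrite H1, H2 in H.
  destruct (pea_plus E a b) as [ab|] eqn:Hab; [|discriminate]. eauto.
Qed.

Lemma one_zero_r (E : PEA) : pea_plus E (pea_one E) (pea_zero E) = Some (pea_one E).
Proof.
  destruct (pea_compl_r E (pea_one E)) as [d [Hd _]].
  assert (d = pea_zero E) by (apply pea_one_zero; left; congruence).
  subst; auto.
Qed.

Lemma zero_one_l (E : PEA) : pea_plus E (pea_zero E) (pea_one E) = Some (pea_one E).
Proof.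
  destruct (pea_compl_l E (pea_one E)) as [d [Hd _]].
  assert (d = pea_zero E) by (apply pea_one_zero; right; congruence).
  subst; auto.
Qed.

Lemma plus_zero_l (E : PEA) (a : E) : pea_plus E (pea_zero E) a = Some a.
Proof.
  destruct (pea_compl_r E a) as [d [Hd _]].
  destruct (assoc_rl E (pea_zero E) a d _ _ Hd (zero_one_l E)) as [s [Hs1 Hs2]].
  destruct (pea_compl_l E d) as [e [He Hu]].
  assert (s = e) by (symmetry; apply Hu; auto).
  assert (a = e) by (symmetry; apply Hu; auto). congruence.
Qed.

Lemma plus_zero_r (E : PEA) (a : E) : pea_plus E a (pea_zero E) = Some a.
Proof.
  destruct (pea_compl_l E a) as [e [He _]].
  destruct (assoc_lr E e a (pea_zero E) _ _ He (one_zero_r E)) as [t [Ht1 Ht2]].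
  destruct (pea_compl_r E e) as [d [Hd Hu]].
  assert (t = d) by (symmetry; apply Hu; auto).
  assert (a = d) by (symmetry; apply Hu; auto). congruence.
Qed.

Lemma meas_le (E : PEA) (m : E -> R) (h : measure E m) a b s :
  pea_plus E a b = Some s -> m a <= m s /\ m b <= m s.
Proof.
  intros H. destruct h as [h0 ha]. rewrite (ha _ _ _ H). pose (h0 a); pose (h0 b). lra.
Qed.

Definition DS (E : PEA) (m1 m2 : E -> R) (a : E) (r : R) : Prop :=
  exists a1 a2, pea_plus E a1 a2 = Some a /\ r = m1 a1 + m2 a2.

Lemma DS_lub (E : PEA) (m1 m2 : E -> R) (hm1 : measure E m1) (hm2 : measure E m2) a :
  {r | is_lub (DS E m1 m2 a) r}.
Proof.
  apply completeness.
  - exists (m1 a + m2 a). intros x [a1 [a2 [H ->]]].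
    destruct (meas_le E m1 hm1 _ _ _ H). destruct (meas_le E m2 hm2 _ _ _ H). lra.
  - exists (m1 a + m2 (pea_zero E)). exists a, (pea_zero E). split; auto. apply plus_zero_r.
Qed.

Lemma sigma_dom (E : PEA) (m1 m2 m : E -> R)
  (hm1 : measure E m1) (hs1 : sigma_additive E m1)
  (hm2 : measure E m2) (hs2 : sigma_additive E m2)
  (hm : measure E m) (hle : forall a, m a <= m1 a + m2 a) : sigma_additive E m.
Proof.
  intros a x Hinc Hsup eps Heps.
  destruct (hs1 a x Hinc Hsup (eps/2)) as [N1 HN1]; [lra|].
  destruct (hs2 a x Hinc Hsup (eps/2)) as [N2 HN2]; [lra|].
  exists (max N1 N2). intros n Hn.
  specialize (HN1 n ltac:(lia)). specialize (HN2 n ltac:(lia)).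
  destruct Hsup as [Hub _]. destruct (Hub n) as [c Hc].
  unfold R_dist in *.
  apply Rabs_def2 in HN1. apply Rabs_def2 in HN2.
  destruct hm1 as [p1 a1], hm2 as [p2 a2], hm as [p a0].
  rewrite (a1 _ _ _ Hc) in HN1. rewrite (a2 _ _ _ Hc) in HN2. rewrite (a0 _ _ _ Hc).
  pose proof (hle c). pose proof (p c). pose proof (p1 c). pose proof (p2 c).
  apply Rabs_def1; lra.
Qed.

Theorem proposition4p4 (E : PEA) (hRDP : RDP E) (m1 m2 : E -> R)
  (hm1 : measure E m1) (hs1 : sigma_additive E m1)
  (hm2 : measure E m2) (hs2 : sigma_additive E m2) :
  ((exists m, is_joinJ E m1 m2 m) /\
   (forall m, is_joinJ E m1 m2 m -> measure E m /\ sigma_additive E m)) /\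
  ((exists m, is_meetJ E m1 m2 m) /\
   (forall m, is_meetJ E m1 m2 m -> measure E m /\ sigma_additive E m)).
Proof.
  pose (J := fun a => proj1_sig (DS_lub E m1 m2 hm1 hm2 a)).
  assert (HJ : forall a, is_lub (DS E m1 m2 a) (J a))
    by (intro a; unfold J; destruct (DS_lub E m1 m2 hm1 hm2 a); auto).
  destruct hm1 as [p1 ad1] eqn:Eh1. destruct hm2 as [p2 ad2] eqn:Eh2.
  assert (m10 : m1 (pea_zero E) = 0).
  { pose proof (ad1 _ _ _ (plus_zero_r E (pea_zero E))). lra. }
  assert (m20 : m2 (pea_zero E) = 0).
  { pose proof (ad2 _ _ _ (plus_zero_r E (pea_zero E))). lra. }
  assert (J1 : forall a, m1 a <= J a).
  { intro a. destruct (HJ a) as [Hu _]. replace (m1 a) with (m1 a + m2 (pea_zero E)) by lra.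
    apply Hu. exists a, (pea_zero E). split; auto. apply plus_zero_r. }
  assert (J2 : forall a, m2 a <= J a).
  { intro a. destruct (HJ a) as [Hu _]. replace (m2 a) with (m1 (pea_zero E) + m2 a) by lra.
    apply Hu. exists (pea_zero E), a. split; auto. apply plus_zero_l. }
  assert (JB : forall a, J a <= m1 a + m2 a).
  { intro a. destruct (HJ a) as [_ Hl]. apply Hl. intros x [a1 [a2 [H ->]]].
    pose proof (ad1 _ _ _ H). pose proof (ad2 _ _ _ H). pose (p1 a2); pose (p2 a1). lra. }
  assert (Jadd : additive E J).
  { intros a b s Hs. apply Rle_antisym.
    - destruct (HJ s) as [_ Hl]. apply Hl. intros x [c1 [c2 [Hc ->]]].
      destruct (hRDP _ _ _ _ _ Hs Hc) as [d1 [d2 [d3 [d4 [H12 [H34 [H13 H24]]]]]]].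
      rewrite (ad1 _ _ _ H13), (ad2 _ _ _ H24).
      assert (m1 d1 + m2 d2 <= J a) by (apply (proj1 (HJ a)); exists d1, d2; auto).
      assert (m1 d3 + m2 d4 <= J b) by (apply (proj1 (HJ b)); exists d3, d4; auto).
      lra.
    - assert (Key : forall x y, DS E m1 m2 a x -> DS E m1 m2 b y -> x + y <= J s).
      { intros x y [a1 [a2 [Ha ->]]] [b1 [b2 [Hb ->]]].
        destruct (assoc_lr E _ _ _ _ _ Ha Hs) as [t [Ht1 Ht2]].
        destruct (assoc_rl E _ _ _ _ _ Hb Ht1) as [u [Hu1 Hu2]].
        destruct (pea_conj E _ _ _ Hu1) as [d [e [Hd _]]].
        destruct (assoc_lr E _ _ _ _ _ Hd Hu2) as [v [Hv1 Hv2]].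
        destruct (assoc_rl E _ _ _ _ _ Hv2 Ht2) as [w [Hw1 Hw2]].
        assert (m1 d = m1 b1).
        { pose proof (ad1 _ _ _ Hd). pose proof (ad1 _ _ _ Hu1). lra. }
        apply (proj1 (HJ s)). exists w, v. split; auto.
        rewrite (ad1 _ _ _ Hw1), (ad2 _ _ _ Hv1). lra. }
      assert (Ja : J a <= J s - J b).
      { apply (proj2 (HJ a)). intros x Hx.
        assert (J b <= J s - x).
        { apply (proj2 (HJ b)). intros y Hy. pose proof (Key x y Hx Hy). lra. }
        lra. }
      lra. }
  assert (Jm : measure E J).
  { split; auto. intro a. pose (p1 a). pose (J1 a). lra. }
  assert (Jup : forall k, leJ E m1 k -> leJ E m2 k -> forall a, J a <= k a).
  { intros k [q1 b1] [q2 b2] a. apply (proj2 (HJ a)). intros x [a1 [a2 [H ->]]].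
    pose proof (b1 _ _ _ H). pose proof (b2 _ _ _ H). pose (q1 a1); pose (q2 a2).
    pose proof (ad1 _ _ _ H). pose proof (ad2 _ _ _ H). lra. }
  assert (m12m : measure E (fun a => m1 a + m2 a)).
  { split. intro a; pose (p1 a); pose (p2 a); lra.
    intros a b s H. rewrite (ad1 _ _ _ H), (ad2 _ _ _ H). lra. }
  assert (s12 : forall m, measure E m -> (forall a, m a <= m1 a + m2 a) -> sigma_additive E m).
  { intros m hm hle. apply (sigma_dom E m1 m2 m); auto; subst; auto. }
  split; split.
  - exists J. split; [|split; [|split]].
    + exists J, (fun _ => 0). split; auto. split. split. intros; lra.
      intros ? ? ? ?; lra. intros; lra.
    + split. intro a; pose (J1 a); lra.
      intros a b s H. rewrite (Jadd _ _ _ H), (ad1 _ _ _ H). lra.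
    + split. intro a; pose (J2 a); lra.
      intros a b s H. rewrite (Jadd _ _ _ H), (ad2 _ _ _ H). lra.
    + intros k _ Hk1 Hk2. split. intro a. pose (Jup k Hk1 Hk2 a). lra.
      intros a b s H. pose proof (proj2 Hk1 _ _ _ H). simpl in *.
      rewrite (Jadd _ _ _ H). pose proof (ad1 _ _ _ H). lra.
  - intros m [_ [[q1 b1] [_ Hu]]].
    assert (L : leJ E m (fun a => m1 a + m2 a)).
    { apply Hu.
      - exists (fun a => m1 a + m2 a), (fun _ => 0). split; auto. split. split.
        intros; lra. intros ? ? ? ?; lra. intros; lra.
      - unfold leJ. split. intro a; pose (p2 a); lra.
        intros a b s H. rewrite (ad1 _ _ _ H), (ad2 _ _ _ H). lra.
      - unfold leJ. split. intro a; pose (p1 a); lra.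
        intros a b s H. rewrite (ad1 _ _ _ H), (ad2 _ _ _ H). lra. }
    assert (mm : measure E m).
    { split. intro a. pose (q1 a); pose (p1 a); lra.
      intros a b s H. pose proof (b1 _ _ _ H). pose proof (ad1 _ _ _ H). lra. }
    split; auto. apply s12; auto. intro a. pose proof (proj1 L a). simpl in *. lra.
  - exists (fun a => m1 a + m2 a - J a). split; [|split; [|split]].
    + exists (fun a => m1 a + m2 a), J. split; auto.
    + split. intro a; pose (J2 a); lra.
      intros a b s H. rewrite (Jadd _ _ _ H), (ad2 _ _ _ H). lra.
    + split. intro a; pose (J1 a); lra.
      intros a b s H. rewrite (Jadd _ _ _ H), (ad1 _ _ _ H). lra.
    + intros k _ [q1 b1] [q2 b2]. split.
      * intro a. assert (J a <= m1 a + m2 a - k a).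
        { apply (proj2 (HJ a)). intros x [a1 [a2 [H ->]]].
          pose proof (b1 _ _ _ H). pose proof (b2 _ _ _ H). pose (q1 a2); pose (q2 a1).
          pose proof (ad1 _ _ _ H). pose proof (ad2 _ _ _ H). lra. }
        lra.
      * intros a b s H. pose proof (b1 _ _ _ H). rewrite (Jadd _ _ _ H), (ad1 _ _ _ H), (ad2 _ _ _ H).
        pose proof (ad1 _ _ _ H). lra.
  - intros m [_ [[q1 b1] [_ Hu]]].
    assert (L : leJ E (fun _ => 0) m).
    { apply Hu.
      - exists (fun _ => 0), (fun _ => 0). split. split. intros; lra. intros ? ? ? ?; lra.
        split. split. intros; lra. intros ? ? ? ?; lra. intros; lra.
      - unfold leJ. split. intro a; pose (p1 a); lra.
        intros a b s H. rewrite (ad1 _ _ _ H). lra.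
      - unfold leJ. split. intro a; pose (p2 a); lra.
        intros a b s H. rewrite (ad2 _ _ _ H). lra. }
    assert (mm : measure E m).
    { destruct L as [l0 la]. split. intro a; pose (l0 a); lra.
      intros a b s H. pose proof (la _ _ _ H). simpl in *. lra. }
    split; auto. apply s12; auto. intro a. pose (q1 a); pose (p2 a). lra.
Qed.
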